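(* Consider the $v$-step controllable system described in the context, so that $(A+BK)^v=0$ with $v\ge 1$. Fix a time slot $k$ and condition on the realized sequence of scheduling actions and transmission outcomes $\{a_j,\delta_j,\gamma_j\}_{j<k}$. Assume that at least $v$ successful controller's transmissions occurred before slot $k$, and that at least one successful sensor's transmission occurred before slot $t^v_k$. Then the plant-state covariance $P_k=\mathbb{E}[x_kx_k^\top]$, where the expectation is over the disturbances, equals $$P_k=F(\phi^0_k)+\sum_{i=0}^{v-2} G\Big(\sum_{j=0}^{i}\phi^j_k-\sum_{j=0}^{i}\tau^{j+1}_k,\ \mathbb{1}(\phi^{i+1}_k>\tau^{i+1}_k)\big(F(\phi^{i+1}_k)-F(\tau^{i+1}_k)\big)\Big).$$ Here an empty sum is zero, so for $v=1$ the formula reads $P_k=F(\phi^0_k)$, and $$G(x,Y)=(A+BK)^xY\big((A+BK)^x\big)^\top .$$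
   Context: Time is discrete, $k=0,1,2,\dots$, and the plant evolves as $x_{k+1}=Ax_k+Bu_k+w_k$. Here $x_k\in\mathbb{R}^n$ and $u_k\in\mathbb{R}^m$, the matrices $A,B$ are constant, and $\{w_k\}$ is i.i.d. zero-mean Gaussian noise with positive definite covariance $R$, independent of the initial state. The spectral radius satisfies $\rho(A)>1$. In each slot $k$ a half-duplex controller chooses $a_k\in\{1,2\}$. If $a_k=1$, the sensor sends the exact state $x_k$ to the controller; if $a_k=2$, the controller sends a control packet to the actuator. Set $\delta_k=1$ iff $a_k=1$ and the sensor's transmission succeeds, and $\delta_k=0$ otherwise. Set $\gamma_k=1$ iff $a_k=2$ and the controller's transmission succeeds, and $\gamma_k=0$ otherwise. The controller's estimate is $\hat x_{k+1}=Ax_k+Bu_k$ if $a_k=1,\delta_k=1$, and $\hat x_{k+1}=A\hat x_k+Bu_k$ otherwise. The controller gain $K\in\mathbb{R}^{m\times n}$ satisfies $\rho(A+BK)<1$, and the prediction length is $v$. In slot $k$ the controller forms the command sequence $\mathcal{C}_k=[K\hat x_k,\,K(A+BK)\hat x_k,\dots,K(A+BK)^{v-1}\hat x_k]$. The actuator keeps a buffer $\mathcal{U}_k=[u^0_k,\dots,u^{v-1}_k]$. It sets $\mathcal{U}_k=\mathcal{C}_k$ if $a_k=2,\gamma_k=1$, and otherwise sets $\mathcal{U}_k=[u^1_{k-1},\dots,u^{v-1}_{k-1},0]$. The applied input is $u_k=u^0_k$. The plant is called $v$-step controllable if $(A+BK)^v=0$; for $v=1$ this means $A+BK=0$. Define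 $F(\tau)=\sum_{i=1}^{\tau}A^{i-1}R(A^\top)^{i-1}$ for $\tau\in\mathbb{N}$. The estimation-quality indicator is $\tau_k$, with $\tau_{k+1}=1$ if $a_k=1,\delta_k=1$ and $\tau_{k+1}=\tau_k+1$ otherwise. It counts the slots since the last successful sensor's transmission. For $i=1,\dots,v$, let $t^i_k$ be the time-slot index of the $i$-th most recent successful controller's transmission strictly before slot $k$; that is, $t^1_k>t^2_k>\dots$ are the slots $j<k$ with $a_j=2,\gamma_j=1$. The state parameters are defined as follows: - $\tau^0_k=\tau_k$, and $\tau^i_k=\tau_{t^i_k}$ for $i=1,\dots,v$. - $\eta^0_k=k-t^1_k$, and $\eta^i_k=t^i_k-t^{i+1}_k$ for $i=1,\dots,v-1$. - $\phi^i_k=\eta^i_k+\tau^{i+1}_k$ for $i=0,\dots,v-1$. *)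

(* Defs.v *)
From HB Require Import structures.
From mathcomp Require Import all_boot all_order all_algebra.
Set Implicit Arguments. Unset Strict Implicit. Unset Printing Implicit Defensive.
Import Order.TTheory GRing.Theory Num.Theory.
Local Open Scope ring_scope.

Section Defs.
Variable R : rcfType.

(* Evaluation of a real polynomial (coefficient list, low degree first)
   at the complex number a + b i, returned as (real part, imaginary part). *)
Fixpoint ceval (s : seq R) (a b : R) : R * R :=
  match s with
  | [::] => (0, 0)
  | c :: s' => let: (re, im) := ceval s' a b in
               (c + (a * re - b * im), a * im + b * re)
  end.

Definition spec_rad_gt1 n (M : 'M[R]_n) : Prop :=
  exists a b : R, ceval (char_poly M) a b = (0, 0) /\ 1 < a ^+ 2 + b ^+ 2.

Definition spec_rad_lt1 n (M : 'M[R]_n) : Prop :=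
  forall a b : R, ceval (char_poly M) a b = (0, 0) -> a ^+ 2 + b ^+ 2 < 1.

Definition posdef n (M : 'M[R]_n) : Prop :=
  M^T = M /\ forall z : 'cV[R]_n, z != 0 -> 0 < (z^T *m M *m z) 0 0.

(* F(tau) = sum_{i=1}^{tau} A^{i-1} R (A^T)^{i-1} *)
Definition Fcov n (A Rw : 'M[R]_n) (tau : nat) : 'M[R]_n :=
  \sum_(i < tau) (A ^+ i *m Rw *m (A ^+ i)^T).

Definition Gfun n (Acl : 'M[R]_n) (x : nat) (Y : 'M[R]_n) : 'M[R]_n :=
  Acl ^+ x *m Y *m (Acl ^+ x)^T.

(* Actuator buffer U_k, as a function of the position index i (only i < v
   is meaningful, entries with i >= v are 0). *)
Definition buf_update m n (v : nat) (K : 'M[R]_(m, n)) (Acl : 'M[R]_n)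
  (xh : 'cV[R]_n) (g : bool) (Uprev : nat -> 'cV[R]_m) : nat -> 'cV[R]_m :=
  if g then (fun i => if (i < v)%N then K *m (Acl ^+ i) *m xh else 0)
  else (fun i => if (i.+1 < v)%N then Uprev i.+1 else 0).

(* Closed-loop system: sys k = (x_k, xhat_k, U_{k-1}), for a given noise
   realization w, initial state x0, initial estimate xh0, initial buffer U0
   (playing the role of U_{-1}). *)
Fixpoint sys m n (v : nat) (A : 'M[R]_n) (B : 'M[R]_(n, m)) (K : 'M[R]_(m, n))
  (delta gamma : nat -> bool) (x0 xh0 : 'cV[R]_n) (U0 : nat -> 'cV[R]_m)
  (w : nat -> 'cV[R]_n) (k : nat) : 'cV[R]_n * 'cV[R]_n * (nat -> 'cV[R]_m) :=
  match k with
  | 0 => (x0, xh0, U0)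
  | k'.+1 =>
      let: (x, xh, Up) := sys v A B K delta gamma x0 xh0 U0 w k' in
      let U := buf_update v K (A + B *m K) xh (gamma k') Up in
      let u := U 0%N in
      (A *m x + B *m u + w k',
       if delta k' then A *m x + B *m u else A *m xh + B *m u,
       U)
  end.

End Defs.

Fixpoint lastb (P : nat -> bool) (k : nat) : option nat :=
  match k with
  | 0 => None
  | k'.+1 => if P k' then Some k' else lastb P k'
  end.

(* t_i: t 0 = k, t (i+1) = most recent successful controller slot strictly
   before t i (so t i = t^i_k for i >= 1); default 0 if none exists. *)
Fixpoint tk (gamma : nat -> bool) (k i : nat) : nat :=
  match i with
  | 0 => k
  | i'.+1 => odflt 0%N (lastb gamma (tk gamma k i'))
  end.

Fixpoint tauseq (tau0 : nat) (delta : nat -> bool) (j : nat) : nat :=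
  match j with
  | 0 => tau0
  | j'.+1 => if delta j' then 1%N else (tauseq tau0 delta j').+1
  end.

Definition tau_k tau0 delta gamma k i : nat := tauseq tau0 delta (tk gamma k i).
Definition eta_k gamma k i : nat := (tk gamma k i - tk gamma k i.+1)%N.
Definition phi_k tau0 delta gamma k i : nat :=
  (eta_k gamma k i + tau_k tau0 delta gamma k i.+1)%N.

(* Main.v *)
Require Import Defs.
From HB Require Import structures.
From mathcomp Require Import all_boot all_order all_algebra.
From mathcomp Require Import zify.
From Stdlib Require Import FunctionalExtensionality.
Set Implicit Arguments. Unset Strict Implicit. Unset Printing Implicit Defensive.
Import Order.TTheory GRing.Theory Num.Theory.
Local Open Scope ring_scope.

Lemma count_iotaS (P : nat -> bool) j :
  count P (iota 0 j.+1) = (count P (iota 0 j) + P j)%N.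
Proof. by rewrite -addn1 iotaD count_cat /= addn0 add0n. Qed.

Lemma lastb_spec (P : nat -> bool) j :
  match lastb P j with
  | Some t => [/\ (t < j)%N, P t, (forall i, (t < i < j)%N -> ~~ P i) &
               count P (iota 0 j) = (count P (iota 0 t)).+1]
  | None => count P (iota 0 j) = 0%N
  end.
Proof.
elim: j => [//|j IH]; rewrite [lastb P j.+1]/=.
case Pj: (P j).
  split=> //; first by move=> i; lia.
  by rewrite count_iotaS Pj addn1.
move: IH; case: (lastb P j) => [t|].
  case=> h1 h2 h3 h4; split=> //; first by lia.
    move=> i hi; case: (ltngtP i j) => hij.
    - by apply: h3; lia.
    - lia.
    - by rewrite hij Pj.
  by rewrite count_iotaS Pj addn0.
by move=> h; rewrite count_iotaS Pj h.
Qed.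

Lemma tk_le gamma k i : (tk gamma k i.+1 <= tk gamma k i)%N.
Proof.
rewrite /=; have := lastb_spec gamma (tk gamma k i).
by case: (lastb gamma (tk gamma k i)) => [t [h1 _ _ _]|_] /=; lia.
Qed.

Lemma tk_cnt gamma k v i : (v <= count gamma (iota 0 k))%N -> (i <= v)%N ->
  (v - i <= count gamma (iota 0 (tk gamma k i)))%N.
Proof.
move=> hc; elim: i => [|i IH] hi; first by rewrite subn0.
have {IH} := IH (ltnW hi).
rewrite [tk _ _ i.+1]/=; have := lastb_spec gamma (tk gamma k i).
case: (lastb gamma (tk gamma k i)) => [t [_ _ _ ->]|->] /=; lia.
Qed.

Lemma tk_step gamma k v i : (v <= count gamma (iota 0 k))%N -> (i < v)%N ->
  [/\ (tk gamma k i.+1 < tk gamma k i)%N, gamma (tk gamma k i.+1) &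
      forall j, (tk gamma k i.+1 < j < tk gamma k i)%N -> ~~ gamma j].
Proof.
move=> hc hi; have := tk_cnt hc (ltnW hi).
rewrite [tk _ _ i.+1]/=; have := lastb_spec gamma (tk gamma k i).
case: (lastb gamma (tk gamma k i)) => [t [h1 h2 h3 _]|->] /=; [by [] | lia].
Qed.

Lemma tk_mono gamma k i j : (i <= j)%N -> (tk gamma k j <= tk gamma k i)%N.
Proof.
move=> hij; rewrite -(subnK hij); elim: (j - i)%N => [|d IH] //=.
by apply: leq_trans (tk_le _ _ _) IH.
Qed.

Lemma tau_mono tau0 delta j1 j2 : (j1 <= j2)%N ->
  (tauseq tau0 delta j2 <= (j2 - j1) + tauseq tau0 delta j1)%N.
Proof.
move=> h; rewrite -{1}(subnK h); elim: (j2 - j1)%N => [|d IH]; first by [].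
rewrite addSn /=; case: (delta (d + j1)); lia.
Qed.

Lemma tau_le tau0 (delta : nat -> bool) j s : (s < j)%N -> delta s -> (tauseq tau0 delta j <= j)%N.
Proof.
elim: j => [//|j IH] hs ds /=.
case dj: (delta j) => //.
have sj : (s < j)%N.
  by move: hs; rewrite ltnS leq_eqVlt => /orP [/eqP Es|//]; move: ds; rewrite Es dj.
by have := IH sj ds; lia.
Qed.
Lemma sum_uniq (R : rcfType) (I : eqType) (s : seq I) (f : I -> nat) (g : I -> R) a :
  uniq (map f s) -> a \in s ->
  \sum_(b <- s) (if f a == f b then g b else 0) = g a.
Proof.
elim: s => [//|b s IH] /= /andP [nf us]; rewrite in_cons big_cons => /orP [/eqP ->|ais].
  rewrite eqxx big1_seq ?addr0 // => c /andP [_ cs].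
  case: eqP => // E; case/negP: nf; rewrite E; exact: map_f.
case: eqP => E.
  by case/negP: nf; rewrite -E; exact: map_f.
by rewrite add0r IH.
Qed.

Lemma cov (R : rcfType) n (Omega : Type) (E : (Omega -> R) -> R)
  (E_add : forall f g, E (fun o => f o + g o) = E f + E g)
  (E_scale : forall (c : R) f, E (fun o => c * f o) = c * E f)
  (Rw : 'M[R]_n) (w : nat -> Omega -> 'cV[R]_n)
  (w_cov : forall i j (p q : 'I_n),
     E (fun o => w i o p 0 * w j o q 0) = if i == j then Rw p q else 0)
  (I : eqType) (s : seq I) (f : I -> nat) (M : I -> 'M[R]_n) (X : Omega -> 'cV[R]_n) :
  uniq (map f s) -> (forall o, X o = \sum_(a <- s) M a *m w (f a) o) ->
  \matrix_(p < n, q < n) E (fun o => X o p 0 * X o q 0)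
    = \sum_(a <- s) M a *m Rw *m (M a)^T.
Proof.
move=> us hX.
have E0 : E (fun _ => 0) = 0.
  have -> : (fun _ : Omega => 0 : R) = (fun o => 0 * 1) by
    apply: functional_extensionality => o; rewrite mul0r.
  by rewrite E_scale mul0r.
have Esum : forall (J : Type) (r : seq J) (F : J -> Omega -> R),
    E (fun o => \sum_(j <- r) F j o) = \sum_(j <- r) E (F j).
  move=> J; elim => [|j r IH] F.
    rewrite big_nil -E0; congr E; apply: functional_extensionality => o.
    by rewrite big_nil.
  rewrite big_cons -IH -E_add; congr E; apply: functional_extensionality => o.
  by rewrite big_cons.
apply/matrixP => p q; rewrite !mxE.
have -> : (fun o => X o p 0 * X o q 0) = (fun o => \sum_(a <- s) \sum_(r < n)
     \sum_(b <- s) \sum_(r' < n) (M a p r * M b q r') * (w (f a) o r 0 * w (f b) o r' 0)).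
  apply: functional_extensionality => o; rewrite hX !summxE mulr_suml.
  apply: eq_bigr => a _; rewrite mxE mulr_suml; apply: eq_bigr => r _.
  rewrite mulr_sumr; apply: eq_bigr => b _; rewrite mxE mulr_sumr.
  by apply: eq_bigr => r' _; rewrite mulrACA.
rewrite Esum summxE; apply: eq_big_seq => a ais.
rewrite Esum.
under eq_bigr => r _ do rewrite Esum.
under eq_bigr => r _ do under eq_bigr => b _ do rewrite Esum.
under eq_bigr => r _ do under eq_bigr => b _ do under eq_bigr => r' _ do
  rewrite E_scale w_cov.
rewrite exchange_big /=.
rewrite (eq_bigr (fun b => if f a == f b then \sum_(r < n) \sum_(r' < n)
      M a p r * M b q r' * Rw r r' else 0)); last first.
  move=> b _; case: eqP => _; last by rewrite big1 // => r _; rewrite big1 // => r' _; rewrite mulr0.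
  by [].
rewrite sum_uniq // !mxE exchange_big /=; apply: eq_bigr => r' _.
rewrite mxE mulr_suml; apply: eq_bigr => r _.
by rewrite mxE mulrAC.
Qed.
Lemma zl (V : zmodType) (a b u c : V) : a + u + c - (b + u) = c + (a - b).
Proof. by rewrite opprD addrAC addrACA subrr addr0 addrC. Qed.

Lemma zl2 (V : zmodType) (a b c u x : V) : a + b + c + u + x = (a + u) + b + (x + c).
Proof. by rewrite [x + c]addrC !addrA; congr (_ + _); rewrite addrAC (addrAC a). Qed.

Section Traj.
Variable R : rcfType.
Variables n m v : nat.
Variables (A : 'M[R]_n) (B : 'M[R]_(n,m)) (K : 'M[R]_(m,n)).
Variables (delta gamma : nat -> bool) (tau0 : nat) (x0 xh0 : 'cV[R]_n)
  (U0 : nat -> 'cV[R]_m) (w : nat -> 'cV[R]_n).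
Hypothesis hdead : (A + B *m K) ^+ v = 0.

Local Notation Acl := (A + B *m K).
Local Notation S j := (sys v A B K delta gamma x0 xh0 U0 w j).
Local Notation xs j := (S j).1.1.
Local Notation xhs j := (S j).1.2.
Local Notation Us j := (S j).2.

Lemma Us_S j : Us j.+1 = buf_update v K Acl (xhs j) (gamma j) (Us j).
Proof. by rewrite /=; case: (S j) => [[x xh] Up]. Qed.

Lemma xs_S j : xs j.+1 = A *m xs j + B *m (Us j.+1 0%N) + w j.
Proof. by rewrite Us_S /=; case: (S j) => [[x xh] Up]. Qed.

Lemma xhs_S j : xhs j.+1 = if delta j then A *m xs j + B *m (Us j.+1 0%N)
   else A *m xhs j + B *m (Us j.+1 0%N).
Proof. by rewrite Us_S /=; case: (S j) => [[x xh] Up]. Qed.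

Definition N j L : 'cV[R]_n := \sum_(l < L) A ^+ l *m w (j - l.+1)%N.

Lemma N_S j L : N j.+1 L.+1 = w j + A *m N j L.
Proof.
rewrite /N big_ord_recl /= expr0 mul1mx subn1 /= mulmx_sumr; congr (_ + _).
by apply: eq_bigr => i _; rewrite exprS mulmxA /bump /= add1n subSS.
Qed.

Lemma N0 j : N j 0 = 0.
Proof. by rewrite /N big_ord0. Qed.

Lemma err j s : (s < j)%N -> delta s ->
  xs j - xhs j = N j (tauseq tau0 delta j) /\ (tauseq tau0 delta j <= j)%N.
Proof.
elim: j => [//|j IH] hs ds.
rewrite xs_S xhs_S.
set u := B *m _.
have -> : tauseq tau0 delta j.+1 = if delta j then 1%N else (tauseq tau0 delta j).+1 by [].
case dj: (delta j).
  split=> //; rewrite /N big_ord1 expr0 mul1mx subn1 /=.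
  by rewrite addrAC subrr add0r.
have sj : (s < j)%N.
  by move: hs; rewrite ltnS leq_eqVlt => /orP [/eqP Es|//]; move: ds; rewrite Es dj.
have [IH1 IH2] := IH sj ds.
split; last by [].
by rewrite N_S -IH1 mulmxBr zl.
Qed.
Lemma Acl_big d : (v <= d)%N -> Acl ^+ d = 0.
Proof. by move=> hd; rewrite -(subnK hd) exprD hdead mulr0. Qed.

Lemma buf t d : gamma t -> (forall i, (t < i <= t + d)%N -> ~~ gamma i) ->
  Us (t + d).+1 = fun i => if (i + d < v)%N then K *m Acl ^+ (i + d) *m xhs t else 0.
Proof.
move=> gt; elim: d => [|d IH] hng.
  rewrite addn0 Us_S gt /buf_update; apply: functional_extensionality => i.
  by rewrite addn0.
have h1 : ~~ gamma (t + d).+1 by apply: hng; lia.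
rewrite addnS Us_S (negbTE h1) IH; last by move=> i hi; apply: hng; lia.
apply: functional_extensionality => i /=.
rewrite addSn addnS.
case: ifP => h2; case: ifP => h3 //; lia.
Qed.

Lemma traj t d : gamma t -> (forall i, (t < i < t + d)%N -> ~~ gamma i) ->
  xs (t + d) = Acl ^+ d *m xhs t + A ^+ d *m (xs t - xhs t) + N (t + d) d.
Proof.
move=> gt; elim: d => [|d IH] hng.
  by rewrite addn0 !expr0 !mul1mx N0 addr0 addrC subrK.
rewrite addnS xs_S buf //; last by move=> i hi; apply: hng; lia.
rewrite IH; last by move=> i hi; apply: hng; lia.
rewrite N_S add0n.
have key : A *m (Acl ^+ d *m xhs t) +
    B *m (if (d < v)%N then K *m Acl ^+ d *m xhs t else 0) = Acl ^+ d.+1 *m xhs t.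
  case: ltnP => hd.
    by rewrite exprS -mulmxE !mulmxA mulmxDl mulmxDl.
  by rewrite (Acl_big hd) (Acl_big (leqW hd)) !mulmx0 !mul0mx mulmx0 addr0.
have eA : A *m A ^+ d = A ^+ d.+1 by rewrite exprS mulmxE.
rewrite -key -eA; move: (xs t - xhs t) (N (t + d) d) => e Nn.
by rewrite !mulmxDr [A *m (A ^+ d *m e)]mulmxA zl2.
Qed.

Lemma Ncomb t d L : N (t + d) (d + L) = N (t + d) d + A ^+ d *m N t L.
Proof.
rewrite /N big_split_ord /=; congr (_ + _); rewrite mulmx_sumr.
apply: eq_bigr => i _; rewrite exprD -mulmxE -mulmxA.
by have -> : (t + d - (d + i).+1 = t - i.+1)%N by lia.
Qed.

Variables (k s : nat).
Hypothesis hctrl : (v <= count gamma (iota 0 k))%N.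
Hypothesis hsv : (s < tk gamma k v)%N.
Hypothesis ds : delta s.

Local Notation T i := (tk gamma k i).
Definition tauT i := tauseq tau0 delta (T i).
Definition phiT i := (T i - T i.+1 + tauT i.+1)%N.
Definition lo i := if i == 0%N then 0%N else tauT i.

Lemma sT i : (i <= v)%N -> (s < T i)%N.
Proof. by move=> h; apply: leq_trans hsv (tk_mono _ _ h). Qed.

Lemma step_i i : (i < v)%N -> xs (T i) =
  Acl ^+ (T i - T i.+1) *m (xs (T i.+1) - N (T i.+1) (tauT i.+1)) + N (T i) (phiT i).
Proof.
move=> hi; have [h1 h2 h3] := tk_step hctrl hi.
have [E _] := err (sT hi) ds.
rewrite /phiT /tauT in E *.
move: h1 h2 h3 E; set t := T i.+1; set d := (T i - t)%N => h1 h2 h3 E.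
have e : T i = (t + d)%N by rewrite /d subnKC // ltnW.
have hx : xhs t = xs t - N t (tauseq tau0 delta t).
  by rewrite -E opprB addrC subrK.
rewrite e traj //; last by rewrite -e.
by rewrite Ncomb E hx -addrA [N _ d + _]addrC.
Qed.

Lemma kT i : (i <= v)%N -> (i <= k - T i)%N.
Proof.
elim: i => [|i IH] hi; first by [].
have [h1 _ _] := tk_step hctrl hi.
have := IH (ltnW hi); have := tk_mono gamma k (leq0n i); rewrite [tk _ _ 0]/=; lia.
Qed.

Lemma chain i : (i <= v)%N -> xs k =
  \sum_(j < i) Acl ^+ (k - T j) *m (N (T j) (phiT j) - N (T j) (lo j))
  + Acl ^+ (k - T i) *m (xs (T i) - N (T i) (lo i)).
Proof.
elim: i => [|i IH] hi.
  by rewrite big_ord0 add0r subnn expr0 mul1mx /lo /= N0 subr0.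
rewrite big_ord_recr /= IH ?(ltnW hi) // step_i //.
have [h1 _ _] := tk_step hctrl hi.
have h0 := tk_mono gamma k (leq0n i); rewrite [tk _ _ 0]/= in h0.
rewrite -[RHS]addrA; congr (_ + _).
rewrite -[odflt _ _]/(T i.+1).
have -> : lo i.+1 = tauT i.+1 by [].
rewrite -[in LHS]addrA [in LHS]addrC mulmxDr; congr (_ + _).
rewrite mulmxA; congr (_ *m _).
by rewrite mulmxE -exprD; congr (_ ^+ _); lia.
Qed.

Lemma xs_rep : xs k =
  \sum_(j < v) Acl ^+ (k - T j) *m (N (T j) (phiT j) - N (T j) (lo j)).
Proof.
by rewrite (chain (leqnn v)) Acl_big ?mul0mx ?addr0 // kT.
Qed.

End Traj.
Lemma sum_diff (V : zmodType) (F : nat -> V) a b : (a <= b)%N ->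
  \sum_(l < b) F l - \sum_(l < a) F l = \sum_(l <- iota a (b - a)) F l.
Proof.
move=> hab; rewrite -!(big_mkord xpredT F) (@big_cat_nat _ _ _ a 0 b) // /=.
by rewrite addrAC subrr add0r.
Qed.

Section Win.
Variables (delta gamma : nat -> bool) (tau0 k v s : nat).
Hypothesis hctrl : (v <= count gamma (iota 0 k))%N.
Hypothesis hsv : (s < tk gamma k v)%N.
Hypothesis ds : delta s.
Local Notation T i := (tk gamma k i).
Local Notation tT := (tauT delta gamma tau0 k).
Local Notation phi := (phiT delta gamma tau0 k).
Local Notation lw := (lo delta gamma tau0 k).

Lemma sT' i : (i <= v)%N -> (s < T i)%N.
Proof. by move=> h; apply: leq_trans hsv (tk_mono _ _ h). Qed.

Lemma tT_le i : (i <= v)%N -> (tT i <= T i)%N.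
Proof. by move=> h; apply: (tau_le _ (sT' h) ds). Qed.

Lemma lo_le i : (i < v)%N -> (lw i <= phi i)%N.
Proof.
move=> hi; rewrite /lo /phiT; case: eqP => // _.
have [h1 _ _] := tk_step hctrl hi.
exact: (tau_mono tau0 delta (ltnW h1)).
Qed.

Lemma phi_le i : (i < v)%N -> (phi i <= T i)%N.
Proof.
move=> hi; have [h1 _ _] := tk_step hctrl hi.
have := tT_le hi; rewrite /phiT; lia.
Qed.

Lemma inj_win i1 i2 l1 l2 : (i1 < v)%N -> (i2 < v)%N ->
  (lw i1 <= l1 < phi i1)%N -> (lw i2 <= l2 < phi i2)%N ->
  (T i1 - l1.+1 = T i2 - l2.+1)%N -> i1 = i2 /\ l1 = l2.
Proof.
wlog: i1 i2 l1 l2 / (i1 <= i2)%N.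
  move=> H h1 h2 h3 h4 h5; case: (leqP i1 i2) => hh; first exact: H.
  by have [-> ->] := H i2 i1 l2 l1 (ltnW hh) h2 h1 h4 h3 (esym h5).
move=> hle hi1 hi2 hl1 hl2 he.
have p1 := phi_le hi1; have p2 := phi_le hi2.
case: (ltngtP i1 i2) hle => // [hlt|e] _; last by subst; split=> //; lia.
exfalso.
have [t1 _ _] := tk_step hctrl hi1.
have m1 : (T i2 <= T i1.+1)%N by apply: tk_mono.
have tm := tau_mono tau0 delta m1.
have tl := tT_le (ltnW hi1).
have tl2 := tT_le (ltnW hi2).
have lo2 : lw i2 = tT i2 by rewrite /lo; case: eqP => //; lia.
move: hl1 hl2 p1 p2 tm tl tl2 lo2 he t1 m1; rewrite /phiT /tauT; lia.
Qed.

Definition sP := [seq (i, l) | i <- iota 0 v, l <- iota (lw i) (phi i - lw i)].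

Lemma uniq_sP : uniq [seq (T x.1 - x.2.+1)%N | x <- sP].
Proof.
rewrite /sP map_allpairs /=.
apply: allpairs_uniq_dep => [|i _|]; rewrite ?iota_uniq //.
move=> p1 p2 /allpairsPdep [i1 [l1 [hi1 hl1 ->]]] /allpairsPdep [i2 [l2 [hi2 hl2 ->]]] /= he.
move: hi1 hi2 hl1 hl2; rewrite !mem_iota !add0n => hi1 hi2 hl1 hl2.
have hh1 := lo_le hi1; have hh2 := lo_le hi2.
have [] := inj_win hi1 hi2 _ _ he; [lia|lia|move=> e1 e2].
by subst.
Qed.

End Win.
Theorem proposition1
  (R : rcfType) (n m v : nat)
  (A : 'M[R]_n) (B : 'M[R]_(n, m)) (K : 'M[R]_(m, n)) (Rw : 'M[R]_n)
  (hRw : posdef Rw) (hA : spec_rad_gt1 A) (hK : spec_rad_lt1 (A + B *m K))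
  (hv : (1 <= v)%N) (hdead : (A + B *m K) ^+ v = 0)
  (* realized schedule and transmission outcomes *)
  (a : nat -> nat) (delta gamma : nat -> bool)
  (ha : forall j, a j = 1%N \/ a j = 2%N)
  (hdelta : forall j, delta j -> a j = 1%N)
  (hgamma : forall j, gamma j -> a j = 2%N)
  (tau0 : nat)
  (* initial plant state, initial estimate, initial actuator buffer *)
  (x0 xh0 : 'cV[R]_n) (U0 : nat -> 'cV[R]_m)
  (* disturbances: random vectors on Omega, with expectation E *)
  (Omega : Type) (E : (Omega -> R) -> R)
  (E_add : forall f g, E (fun o => f o + g o) = E f + E g)
  (E_scale : forall (c : R) f, E (fun o => c * f o) = c * E f)
  (E_one : E (fun _ => 1) = 1)
  (w : nat -> Omega -> 'cV[R]_n)
  (w_mean : forall i (p : 'I_n), E (fun o => w i o p 0) = 0)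
  (w_cov : forall i j (p q : 'I_n),
     E (fun o => w i o p 0 * w j o q 0) = if i == j then Rw p q else 0)
  (k : nat)
  (hctrl : (v <= count gamma (iota 0 k))%N)
  (hsens : exists s, (s < tk gamma k v)%N /\ delta s) :
  let x := fun o => (sys v A B K delta gamma x0 xh0 U0 (fun j => w j o) k).1.1 in
  let P := \matrix_(p < n, q < n) E (fun o => x o p 0 * x o q 0) in
  let tau := tau_k tau0 delta gamma k in
  let phi := phi_k tau0 delta gamma k in
  P = Fcov A Rw (phi 0%N)
      + \sum_(i < v.-1)
          Gfun (A + B *m K)
            (\sum_(j < i.+1) phi j - \sum_(j < i.+1) tau j.+1)%N
            (if (tau i.+1 < phi i.+1)%N
             then Fcov A Rw (phi i.+1) - Fcov A Rw (tau i.+1) else 0).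
Proof.
move=> x P ta ph.
have [s0 [hsv ds]] := hsens.
set Acl := A + B *m K.
pose T i := tk gamma k i.
pose Mx (a : nat * nat) := Acl ^+ (k - T a.1) *m A ^+ a.2.
pose fx (a : nat * nat) := (T a.1 - a.2.+1)%N.
have ii : iota 0 v = index_iota 0 v by rewrite /index_iota subn0.
have rep : forall o, x o = \sum_(a <- sP delta gamma tau0 k v) Mx a *m w (fx a) o.
  move=> o; rewrite /x (xs_rep tau0 x0 xh0 U0 (fun j => w j o) hdead hctrl hsv ds).
  rewrite /sP big_allpairs_dep ii big_mkord; apply: eq_bigr => i _.
  rewrite /N (sum_diff (fun l : nat => A ^+ l *m w (tk gamma k i - l.+1)%N o));
    last exact: (lo_le delta tau0 hctrl (ltn_ord i)).
  rewrite mulmx_sumr; apply: eq_bigr => l _.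
  by rewrite /Mx /fx /= mulmxA.
have -> : P = \sum_(a <- sP delta gamma tau0 k v) Mx a *m Rw *m (Mx a)^T.
  exact: (cov E_add E_scale w_cov (uniq_sP tau0 hctrl hsv ds) rep).
rewrite /sP big_allpairs_dep ii big_mkord.
have inner : forall i : 'I_v,
  \sum_(l <- iota (lo delta gamma tau0 k i) (phiT delta gamma tau0 k i - lo delta gamma tau0 k i))
     (Mx (nat_of_ord i, l) *m Rw *m (Mx (nat_of_ord i, l))^T)
  = Gfun Acl (k - T i) (Fcov A Rw (phiT delta gamma tau0 k i) - Fcov A Rw (lo delta gamma tau0 k i)).
  move=> i; rewrite /Fcov (sum_diff (fun l : nat => A ^+ l *m Rw *m (A ^+ l)^T));
    last exact: (lo_le delta tau0 hctrl (ltn_ord i)).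
  rewrite /Gfun mulmx_sumr mulmx_suml; apply: eq_bigr => l _.
  by rewrite /Mx /= trmx_mul !mulmxA.
rewrite (eq_bigr _ (fun i _ => inner i)) {inner}.
have ev : v = v.-1.+1 by lia.
have eph : forall i, ph i = phiT delta gamma tau0 k i by [].
have eta : forall i, ta i = tauT delta gamma tau0 k i by [].
have sumeq : forall i, (\sum_(j < i) ph j = (k - T i) + \sum_(j < i) ta j.+1)%N.
  elim=> [|i IH]; first by rewrite !big_ord0 /T /= subnn.
  rewrite !big_ord_recr /= IH eph /phiT -eta.
  have h1 := tk_le gamma k i; have h0 := tk_mono gamma k (leq0n i).
  rewrite [tk _ _ 0]/= in h0; rewrite /T; move: h1 h0.
  move: (\sum_(j < i) ta j.+1) (ta i.+1) (tk gamma k i) (tk gamma k i.+1) => a1 b1 c1 d1. lia.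
move: (ltn_ord (ord0 : 'I_v.-1.+1)) => _.
rewrite [in LHS]ev big_ord_recl /=.
congr (_ + _).
  rewrite /T /= subnn /Gfun expr0 mul1mx trmx1 mulmx1 /lo /= /Fcov big_ord0 subr0.
  by [].
apply: eq_bigr => i _.
rewrite /bump /= add1n sumeq addnK.
have hi : (i.+1 < v)%N by have := ltn_ord i; lia.
have hl := lo_le delta tau0 hctrl hi.
rewrite eph eta /lo /=.
case: ltnP => h //.
have -> : tauT delta gamma tau0 k i.+1 = phiT delta gamma tau0 k i.+1.
  by move: hl; rewrite /lo /=; lia.
by rewrite subrr.
Qed.
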